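(* Run WSU-UX with $K=2$ and any valid $(\eta,\gamma)$ on the two-phase loss sequence. Let $t>T_1$ be a round with $2^{-m}\le\pi_{t,1}\le 2^{-(m-1)}$ for some positive integer $m$. If arm 2 is pulled at least $k=\frac{2}{\eta}m$ times in rounds $t,t+1,\dots,T$, and $t'$ denotes the round immediately after the $\lceil k\rceil$-th such pull, then $\pi_{t',1}\ge\frac14$.
   Context: WSU-UX. Fix integers $K\ge 2$ and $T\ge 1$ and hyperparameters $\eta,\gamma$. The pair $(\eta,\gamma)$ is called valid if $\eta,\gamma\in(0,1/2)$ and $\eta K/\gamma\le 1/2$. Given a fixed loss sequence $\ell_t\in[0,1]^K$, WSU-UX sets $\pi_{1,i}=1/K$ and in each round $t$: forms $\tilde\pi_{t,i}=(1-\gamma)\pi_{t,i}+\gamma/K$; draws $I_t$ with $\Pr(I_t=i\mid\mathcal F_{t-1})=\tilde\pi_{t,i}$; sets $\hat\ell_{t,i}=\ell_{t,i}\mathbf 1[I_t=i]/\tilde\pi_{t,i}$; and updates $\pi_{t+1,i}=\pi_{t,i}\bigl(1-\eta(\hat\ell_{t,i}-\sum_{j}\pi_{t,j}\hat\ell_{t,j})\bigr)$; $\mathcal F_t$ is the history generated by $I_1,\dots,I_t$. Two-phase loss sequence ($K=2$, $T$ a multiple of $100$, $T_1=T/100$): $\ell_{t,1}=1,\ell_{t,2}=0$ for $1\le t\le T_1$ and $\ell_{t,1}=0,\ell_{t,2}=1$ for $T_1<t\le T$. *)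

(* Defs.v *)
From mathcomp Require Import all_boot all_order all_algebra.
Set Implicit Arguments. Unset Strict Implicit. Unset Printing Implicit Defensive.
Import Order.TTheory GRing.Theory Num.Theory.
Local Open Scope ring_scope.

Section WSU.
Variable R : archiRealFieldType.

Definition valid_params (K : nat) (eta gamma : R) : Prop :=
  [/\ 0 < eta, eta < 1/2, 0 < gamma, gamma < 1/2 & eta * K%:R / gamma <= 1/2].

Definition wsu_mix (K : nat) (gamma : R) (pi : 'I_K -> R) (i : 'I_K) : R :=
  (1 - gamma) * pi i + gamma / K%:R.

Definition wsu_lhat (K : nat) (gamma : R) (pi : 'I_K -> R) (l : 'I_K -> R)
  (It : 'I_K) (i : 'I_K) : R :=
  l i * (It == i)%:R / wsu_mix gamma pi i.

Definition wsu_step (K : nat) (eta gamma : R) (pi : 'I_K -> R) (l : 'I_K -> R)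
  (It : 'I_K) : 'I_K -> R :=
  fun i => pi i * (1 - eta * (wsu_lhat gamma pi l It i
                       - \sum_(j < K) pi j * wsu_lhat gamma pi l It j)).

(* wsu_pi_aux n = pi_{n+1}; rounds are numbered 1,2,...; I t is the arm
   pulled in round t, loss t is the loss vector of round t. *)
Fixpoint wsu_pi_aux (K : nat) (eta gamma : R) (loss : nat -> 'I_K -> R)
  (I : nat -> 'I_K) (n : nat) : 'I_K -> R :=
  match n with
  | 0 => fun _ => 1 / K%:R
  | n'.+1 => wsu_step eta gamma (wsu_pi_aux eta gamma loss I n') (loss n) (I n)
  end.

Definition wsu_pi (K : nat) (eta gamma : R) (loss : nat -> 'I_K -> R)
  (I : nat -> 'I_K) (t : nat) : 'I_K -> R :=
  wsu_pi_aux eta gamma loss I t.-1.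

(* Two-phase loss sequence for K = 2; arm 1 is ord0, arm 2 is ord_max.
   T1 = T/100. *)
Definition two_phase_loss (T : nat) (t : nat) (i : 'I_2) : R :=
  if (t <= T %/ 100)%N then (if i == ord0 then 1 else 0)
  else (if i == ord0 then 0 else 1).

Definition pulls (K : nat) (I : nat -> 'I_K) (i : 'I_K) (a b : nat) : nat :=
  count (fun u => I u == i) (iota a (b.+1 - a)).

End WSU.

(* Main.v *)
Require Import Defs.
From mathcomp Require Import all_boot all_order all_algebra ring lra.
Import Order.TTheory GRing.Theory Num.Theory.
Local Open Scope ring_scope.

Lemma sum2 (R : archiRealFieldType) (F : 'I_2 -> R) : \sum_(j<2) F j = F ord0 + F ord_max.
Proof. by rewrite big_ord_recr big_ord1 /=; congr (F _ + _); apply: val_inj. Qed.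

Lemma step_ord_max (R : archiRealFieldType) eta gamma (pi l : 'I_2 -> R) :
  let q := wsu_mix gamma pi ord_max in
  wsu_step eta gamma pi l ord_max ord0 = pi ord0 * (1 + eta * pi ord_max * l ord_max / q) /\
  wsu_step eta gamma pi l ord_max ord_max = pi ord_max * (1 - eta * (1 - pi ord_max) * l ord_max / q).
Proof. rewrite /= /wsu_step /wsu_lhat !sum2 /=. by split; ring. Qed.

Lemma step_ord0 (R : archiRealFieldType) eta gamma (pi l : 'I_2 -> R) :
  let q := wsu_mix gamma pi ord0 in
  wsu_step eta gamma pi l ord0 ord0 = pi ord0 * (1 - eta * (1 - pi ord0) * l ord0 / q) /\
  wsu_step eta gamma pi l ord0 ord_max = pi ord_max * (1 + eta * pi ord0 * l ord0 / q).
Proof. rewrite /= /wsu_step /wsu_lhat !sum2 /=. by split; ring. Qed.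
Lemma upd_ok (R : archiRealFieldType) (eta q a b lv : R) :
  0 < eta -> 2 * eta <= q -> 0 <= a -> 0 <= b -> a + b = 1 -> 0 <= lv <= 1 ->
  [/\ 0 <= a * (1 + eta * b * lv / q), 0 <= b * (1 - eta * (1 - b) * lv / q) &
      a * (1 + eta * b * lv / q) + b * (1 - eta * (1 - b) * lv / q) = 1].
Proof.
move=> he hq ha hb hab /andP[hl0 hl1].
have q0 : 0 < q by lra.
set r := q^-1.
have r0 : 0 < r by rewrite invr_gt0.
have qr : q * r = 1 by rewrite divff // gt_eqF.
have er : eta * r <= 1/2.
  have : 2 * eta * r <= q * r by rewrite ler_pM2r.
  rewrite qr; lra.
have b1 : b <= 1 by lra.
split.
- apply: mulr_ge0 => //. rewrite -/r.
  have -> : 1 + eta * b * lv * r = 1 + eta * r * (b * lv) by ring.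
  have : 0 <= eta * r * (b * lv) by apply: mulr_ge0; [apply: mulr_ge0; lra| apply: mulr_ge0].
  lra.
- apply: mulr_ge0 => //. rewrite -/r.
  have h1 : (1 - b) * lv <= 1.
    have : (1 - b) * lv <= 1 * 1 by apply: ler_pM; lra.
    lra.
  have h2 : 0 <= (1 - b) * lv by apply: mulr_ge0; lra.
  have : eta * r * ((1 - b) * lv) <= eta * r by rewrite ler_piMr //; apply: mulr_ge0; lra.
  have -> : 1 - eta * (1 - b) * lv * r = 1 - eta * r * ((1 - b) * lv) by ring.
  lra.
- rewrite -/r. have -> : a = 1 - b by lra. ring.
Qed.
Lemma bern (R : archiRealFieldType) (c : R) (r : nat) : 0 <= c -> 1 + r%:R * c <= (1 + c) ^+ r.
Proof.
move=> c0; elim: r => [|r IH]; first by rewrite expr0 mul0r addr0.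
rewrite exprS -natr1.
have h : (1 + c) * (1 + r%:R * c) <= (1 + c) * (1 + c) ^+ r by rewrite ler_wpM2l //; lra.
have : 0 <= r%:R * c * c by apply: mulr_ge0 => //; apply: mulr_ge0.
have : (1 + c) * (1 + r%:R * c) = 1 + (r%:R + 1) * c + r%:R * c * c by ring.
lra.
Qed.

Lemma pow_bound (R : archiRealFieldType) (eta : R) (m n : nat) :
  0 < eta -> eta < 1/2 -> 2 / eta * m%:R <= n%:R ->
  2 ^+ m <= (1 + eta * 3 / 4) ^+ n.
Proof.
move=> e0 e1 hn.
have ie0 : 0 < 2 / eta by rewrite divr_gt0.
have /andP[hr1 hr2] := truncn_itv (ltW ie0).
set r := Num.truncn (2 / eta) in hr1 hr2.
have ee : eta * (2 / eta) = 2 by rewrite mulrC -mulrA mulVf ?mulr1 // gt_eqF.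
have rle : r%:R * eta <= 2.
  have : r%:R * eta <= 2 / eta * eta by rewrite ler_pM2r.
  by rewrite [2 / eta * eta]mulrC ee.
have rgt : 2 < r.+1%:R * eta.
  have : 2 / eta * eta < r.+1%:R * eta by rewrite ltr_pM2r.
  by rewrite [2 / eta * eta]mulrC ee.
rewrite -natr1 in rgt.
have c0 : 0 <= eta * 3 / 4 by lra.
have h2 : 2 <= (1 + eta * 3 / 4) ^+ r.
  apply: (le_trans _ (@bern _ _ r c0)).
  have -> : r%:R * (eta * 3 / 4) = (r%:R * eta) * 3 / 4 by ring.
  have : (r%:R + 1) * eta = r%:R * eta + eta by ring.
  lra.
have hrm : (r * m <= n)%N.
  rewrite -(ler_nat R) natrM; apply: le_trans hn.
  by apply: ler_wpM2r; [exact: ler0n | exact: hr1].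
apply: (le_trans _ (ler_weXn2l _ hrm)); last by lra.
rewrite exprM.
have := @lerXn2r _ m 2 ((1 + eta * 3 / 4) ^+ r).
rewrite !nnegrE /=; apply => //; try lra; apply: exprn_ge0; lra.

Qed.

Lemma ord2_cases (i : 'I_2) : i = ord0 \/ i = ord_max.
Proof. by case: i => [[|[|k]]] Hi; [left|right|] => //; apply: val_inj. Qed.

Lemma mix_ge (R : archiRealFieldType) (eta gamma : R) (pi : 'I_2 -> R) j :
  valid_params 2 eta gamma -> 0 <= pi j -> 2 * eta <= wsu_mix gamma pi j.
Proof.
case=> e0 e1 g0 g1 hv hp; rewrite /wsu_mix.
have h : eta * 2 <= gamma / 2.
  have : eta * 2%:R / gamma * gamma <= 1 / 2 * gamma by rewrite ler_pM2r.
  rewrite mulfVK ?gt_eqF //; lra.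
have : 0 <= (1 - gamma) * pi j by apply: mulr_ge0 => //; lra.
lra.
Qed.

Lemma loss_bnd (R : archiRealFieldType) T u i : 0 <= two_phase_loss R T u i <= 1.
Proof. by rewrite /two_phase_loss; case: ifP => _; case: ifP => _; rewrite ?lexx ?ler01. Qed.

Lemma inv (R : archiRealFieldType) T (eta gamma : R) I n :
  valid_params 2 eta gamma ->
  let P := wsu_pi_aux eta gamma (two_phase_loss R T) I n in
  [/\ 0 <= P ord0, 0 <= P ord_max & P ord0 + P ord_max = 1].
Proof.
move=> hv; elim: n => [|n [h0 h1 hs]] /=.
  split; [lra|lra|lra].
set P := wsu_pi_aux eta gamma (two_phase_loss R T) I n in h0 h1 hs *.
have e0 : 0 < eta by case: hv.
have [->|->] := ord2_cases (I n.+1).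
- have [-> ->] := step_ord0 _ eta gamma P (two_phase_loss R T n.+1).
  have [a1 a2 a3] := upd_ok _ _ _ _ _ _ e0 (mix_ge _ _ _ _ ord0 hv h0) h1 h0 (etrans (addrC _ _) hs) (loss_bnd R T n.+1 ord0).
  by split=> //; rewrite addrC.
- have [-> ->] := step_ord_max _ eta gamma P (two_phase_loss R T n.+1).
  have [a1 a2 a3] := upd_ok _ _ _ _ _ _ e0 (mix_ge _ _ _ _ ord_max hv h1) h0 h1 hs (loss_bnd R T n.+1 ord_max).
  by split.
Qed.

Lemma claim (R : archiRealFieldType) T (eta gamma : R) I t' d :
  valid_params 2 eta gamma -> (T %/ 100 < t'.+1)%N ->
  let P := wsu_pi_aux eta gamma (two_phase_loss R T) I in
  1/4 <= P (t' + d)%N ord0 \/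
  P t' ord0 * (1 + eta * 3 / 4) ^+ count (fun u => I u == ord_max) (iota t'.+1 d)
    <= P (t' + d)%N ord0.
Proof.
move=> hv ht P.
have [e0 e1 g0 g1 _] := hv.
elim: d => [|d IH].
  by right; rewrite addn0 /= expr0 mulr1.
have -> : iota t'.+1 d.+1 = iota t'.+1 d ++ [:: t'.+1 + d]%N by rewrite -(iotaD t'.+1 d 1) addn1.
rewrite count_cat /= addn0 addnS.
have hph : (T %/ 100 < (t' + d).+1)%N by apply: leq_trans ht _; rewrite ltnS leq_addr.
have l0 : two_phase_loss R T (t' + d).+1 ord0 = 0.
  by rewrite /two_phase_loss leqNgt hph.
have l1 : two_phase_loss R T (t' + d).+1 ord_max = 0 + 1.
  by rewrite /two_phase_loss leqNgt hph /= add0r.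
have [h0 h1 hs] := inv R T eta gamma I (t' + d) hv.
rewrite -/P in h0 h1 hs.
rewrite addSn.
have -> : P (t' + d).+1 = wsu_step eta gamma (P (t' + d)%N) (two_phase_loss R T (t' + d).+1) (I (t' + d).+1) by [].
have [->|->] := ord2_cases (I (t' + d).+1).
- have [-> _] := step_ord0 _ eta gamma (P (t' + d)%N) (two_phase_loss R T (t' + d).+1).
  rewrite l0 !mulr0 mul0r subr0 mulr1 /= addn0.
  exact: IH.
- have [-> _] := step_ord_max _ eta gamma (P (t' + d)%N) (two_phase_loss R T (t' + d).+1).
  rewrite l1 add0r mulr1 /=.
  set y := P (t' + d)%N ord0 in IH h0 hs *.
  set b := P (t' + d)%N ord_max in h1 hs *.
  set q := wsu_mix gamma (P (t' + d)%N) ord_max.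
  have qq : q = (1 - gamma) * b + gamma / 2%:R by [].
  have q0 : 0 < q.
    have : 0 <= (1 - gamma) * b by apply: mulr_ge0; lra.
    have : 0 < gamma / 2%:R by rewrite divr_gt0.
    rewrite qq; lra.
  have q1 : q <= 1.
    rewrite qq; have : (1 - gamma) * b <= (1 - gamma) * 1 by apply: ler_wpM2l; lra.
    lra.
  have r1 : 1 <= q^-1 by rewrite invf_ge1.
  have inc : 0 <= eta * b / q.
    by apply: divr_ge0; [apply: mulr_ge0; lra | lra].
  have ge : y <= y * (1 + eta * b / q).
    by rewrite ler_peMr //; lra.
  case: (lerP (1/4) y) => hy.
    by left; apply: le_trans ge.
  right.
  case: IH => IH; first by lra.
  have hb : 3/4 <= b by lra.
  have k1 : eta * 3 / 4 <= eta * b / q.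
    have : eta * b * 1 <= eta * b * q^-1 by apply: ler_wpM2l => //; apply: mulr_ge0; lra.
    have : eta * 3 / 4 <= eta * b by rewrite -mulrA ler_wpM2l //; lra.
    rewrite mulr1; lra.
  rewrite addn1 exprSr.
  have y0 : 0 <= y by [].
  have : P t' ord0 * (1 + eta * 3 / 4) ^+ count (fun u => I u == ord_max) (iota t'.+1 d) * (1 + eta * 3 / 4)
    <= y * (1 + eta * 3 / 4) by apply: ler_wpM2r => //; lra.
  have : y * (1 + eta * 3 / 4) <= y * (1 + eta * b / q) by apply: ler_wpM2l => //; lra.
  rewrite -mulrA. lra.
Qed.

Theorem mainTheorem16 (R : archiRealFieldType) (T : nat) (eta gamma : R)
  (I : nat -> 'I_2) (t m s : nat) :
  (0 < T)%N -> (100 %| T)%N ->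
  valid_params 2 eta gamma ->
  (T %/ 100 < t)%N -> (t <= T)%N ->
  (0 < m)%N ->
  2^-m <= wsu_pi eta gamma (two_phase_loss R T) I t ord0 <= 2^-(m.-1) ->
  (t <= s)%N -> (s <= T)%N ->
  I s = ord_max ->
  (pulls I ord_max t s)%:~R = Num.ceil (2 / eta * m%:R) ->
  1/4 <= wsu_pi eta gamma (two_phase_loss R T) I s.+1 ord0.
Proof.
move=> _ _ hv ht _ _ /andP[hx0 _] hts _ _ hpull.
have [e0 e1 _ _ _] := hv.
case: t ht hx0 hts hpull => [|t'] //= ht hx0 hts hpull.
rewrite /wsu_pi /= in hx0 *.
have := claim R T eta gamma I t' (s - t') hv ht.
rewrite subnKC; last by apply: ltnW.
case=> // h.
move: h; rewrite /pulls subSS in hpull.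
set n := count _ _ in hpull *.
move=> h.
have hn : 2 / eta * m%:R <= n%:R.
  apply: le_trans (ceil_ge _) _.
  by rewrite -hpull intz -pmulrn.
have hp := pow_bound _ _ m n e0 e1 hn.
apply: le_trans h.
set x0 := wsu_pi_aux _ _ _ _ _ _ in hx0 *.
have p0 : 0 < 2 ^+ m :> R by apply: exprn_gt0; lra.
have : (2 ^+ m)^-1 * 2 ^+ m <= x0 * (1 + eta * 3 / 4) ^+ n.
  apply: ler_pM => //; [by rewrite invr_ge0 ltW | exact: ltW].
rewrite mulVf ?gt_eqF //; lra.
Qed.
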